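(* For every $n\ge1$, the coordinates $(p_j,u_j)$ of the trajectory $T_n$ satisfy $p_0>p_1>\dots>p_{n-1}>p_n=0$ and $0=u_0<u_1<\dots<u_n$.
   Context: $\Phi$ is the partial map of $\mathbb{R}^2$ defined for $p\ne0$ by $\Phi(p,u)=\bigl(p^2(u+1)-1,\ 1/p\bigr)$. For $n\ge1$, the trajectory $T_n$ is the (existing and unique) finite sequence $(p_j,u_j)$, $j=0,\dots,n$, with $(p_j,u_j)=\Phi(p_{j-1},u_{j-1})$ for $1\le j\le n$, $u_0=0$, $p_n=0$, and $p_j>0$ for $0\le j\le n-1$. *)

(* Defs.v *)
From Stdlib Require Import Reals.
Open Scope R_scope.

(* Phi(p,u) = (p^2 (u+1) - 1, 1/p); a partial map, defined for p <> 0.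
   We write it as a total function; it is only ever applied at points with
   p > 0 in the trajectory definition below, so the junk value 1/0 is never used. *)
Definition Phi (x : R * R) : R * R :=
  let (p, u) := x in (p ^ 2 * (u + 1) - 1, 1 / p).

Definition is_trajectory (n : nat) (p u : nat -> R) : Prop :=
  (forall j : nat, (1 <= j <= n)%nat -> (p j, u j) = Phi (p (j - 1)%nat, u (j - 1)%nat)) /\
  u 0%nat = 0 /\
  p n = 0 /\
  (forall j : nat, (j <= n - 1)%nat -> 0 < p j).

(* Main.v *)
Require Import Defs.
From Stdlib Require Import Reals Lra Lia Psatz.
Open Scope R_scope.

Lemma rec_step (n : nat) (p u : nat -> R) :
  is_trajectory n p u -> forall j, (j < n)%nat ->
  p (S j) = p j ^ 2 * (u j + 1) - 1 /\ u (S j) = 1 / p j.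
Proof.
  intros [H _] j Hj.
  specialize (H (S j) ltac:(lia)).
  replace (S j - 1)%nat with j in H by lia.
  unfold Phi in H. injection H. auto.
Qed.

Theorem lemma4 (n : nat) (p u : nat -> R) :
  (1 <= n)%nat -> is_trajectory n p u ->
  (forall j : nat, (j < n)%nat -> p (S j) < p j) /\
  (forall j : nat, (j < n)%nat -> u j < u (S j)).
Proof.
  intros Hn HT.
  pose proof HT as [_ [Hu0 [Hpn Hpos]]].
  assert (R1 : forall j, (j < n)%nat -> p (S j) = p j ^ 2 * (u j + 1) - 1)
    by (intros j Hj; exact (proj1 (rec_step n p u HT j Hj))).
  assert (R2 : forall j, (j < n)%nat -> u (S j) = 1 / p j)
    by (intros j Hj; exact (proj2 (rec_step n p u HT j Hj))).
  assert (Prop1 : forall j, (j < n)%nat -> 1 <= p j -> p j <= p (S j) ->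
            forall m, (j + m + 1 <= n)%nat -> 1 <= p (j + m)%nat /\ p (j+m)%nat <= p (S (j + m))).
  { intros j Hj H1 H2 m. induction m as [|m IH]; intros Hm.
    - rewrite Nat.add_0_r. auto.
    - destruct (IH ltac:(lia)) as [A B].
      replace (j + S m)%nat with (S (j + m)) by lia.
      split; [lra|].
      rewrite (R1 (S (j+m)) ltac:(lia)), (R2 (j+m)%nat ltac:(lia)).
      set (a := p (j+m)%nat) in *. set (b := p (S (j+m))) in *.
      assert (Hv : (1/a) * a = 1) by (field; lra).
      assert (0 < 1/a) by (apply Rdiv_lt_0_compat; lra).
      nra. }
  assert (Pdec : forall j, (j < n)%nat -> p (S j) < p j).
  { intro j. induction j as [j IHj] using (well_founded_induction Wf_nat.lt_wf).
    intros Hj.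
    destruct (Rlt_or_le (p (S j)) (p j)) as [Hlt|Hge]; [exact Hlt|exfalso].
    assert (Hpj : 0 < p j) by (apply Hpos; lia).
    assert (H1 : 1 <= p j).
    { destruct j as [|k].
      - rewrite (R1 0%nat ltac:(lia)), Hu0 in Hge. nra.
      - assert (Hk : p (S k) < p k) by (apply IHj; lia).
        rewrite (R1 (S k) ltac:(lia)), (R2 k ltac:(lia)) in Hge.
        assert (Hpk : 0 < p k) by (apply Hpos; lia).
        set (a := p k) in *. set (b := p (S k)) in *.
        assert (Hv : (1/a) * a = 1) by (field; lra).
        assert (0 < 1/a) by (apply Rdiv_lt_0_compat; lra).
        destruct (Rlt_or_le b 1); [|lra].
        assert (b * (1/a) < 1) by nra.
        nra. }
    destruct (Prop1 j Hj H1 Hge (n - j - 1)%nat ltac:(lia)) as [_ B].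
    replace (S (j + (n - j - 1))) with n in B by lia.
    destruct (Prop1 j Hj H1 Hge (n - j - 1)%nat ltac:(lia)) as [A _].
    lra. }
  split; [exact Pdec|].
  intros j Hj. rewrite (R2 j Hj).
  assert (Hpj : 0 < p j) by (apply Hpos; lia).
  destruct j as [|k].
  - rewrite Hu0. apply Rdiv_lt_0_compat; lra.
  - rewrite (R2 k ltac:(lia)).
    assert (p (S k) < p k) by (apply Pdec; lia).
    unfold Rdiv. rewrite !Rmult_1_l. apply Rinv_lt_contravar; nra.
Qed.
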